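(* Let $f: (\mathbb{R}^{+})^n \to (\mathbb{R}^{+})^n$ be homogeneous and monotone. All super-eigenspaces $S^\lambda(f) = \{x \in (\mathbb{R}^{+})^n : f(x) \le \lambda x\}$, $\lambda \in \mathbb{R}^{+}$, are bounded in the Hilbert projective metric if and only if $f$ is indecomposable.
   Context: Homogeneous: $f(\lambda x) = \lambda f(x)$ for all $\lambda > 0$; monotone: $x \le y$ componentwise implies $f(x) \le f(y)$. For $u>0$ and $J \subseteq \{1,\dots,n\}$, $u_J$ has entries $u$ on $J$ and $1$ off $J$. $f$ is decomposable if there is a partition $\{1,\dots,n\} = I \cup J$ with $I \cap J = \emptyset$, $I, J$ nonempty, such that $\lim_{u\to\infty} f_i(u_J) < \infty$ for all $i \in I$; indecomposable otherwise. Hilbert projective metric: $d_H(y,z) = \max_i \log(y_i/z_i) - \min_i \log(y_i/z_i)$; a set $A$ is bounded if $\sup_{y,z\in A} d_H(y,z)<\infty$. *)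

(* Defs.v *)
From mathcomp Require Import ssreflect ssrbool ssrfun eqtype ssrnat fintype finset.
From Stdlib Require Import Reals.
From Coquelicot Require Import Coquelicot.
Open Scope R_scope.

Definition vec (n : nat) := 'I_n -> R.

Definition pos_vec {n} (x : vec n) : Prop := forall i, 0 < x i.

Definition vle {n} (x y : vec n) : Prop := forall i, x i <= y i.

Definition vscale {n} (l : R) (x : vec n) : vec n := fun i => l * x i.

Definition maps_pos {n} (f : vec n -> vec n) : Prop :=
  forall x, pos_vec x -> pos_vec (f x).

Definition homogeneous {n} (f : vec n -> vec n) : Prop :=
  forall (l : R) (x : vec n), 0 < l -> pos_vec x -> f (vscale l x) = vscale l (f x).

Definition monotone {n} (f : vec n -> vec n) : Prop :=
  forall x y : vec n, pos_vec x -> pos_vec y -> vle x y -> vle (f x) (f y).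

Definition uJ {n} (u : R) (J : {set 'I_n}) : vec n :=
  fun i => if i \in J then u else 1.

Definition decomposable {n} (f : vec n -> vec n) : Prop :=
  exists I J : {set 'I_n},
    I :&: J = set0 /\ I :|: J = setT /\ I != set0 /\ J != set0 /\
    forall i, i \in I -> ex_finite_lim (fun u => f (uJ u J) i) p_infty.

Definition indecomposable {n} (f : vec n -> vec n) : Prop := ~ decomposable f.

(* Hilbert projective metric: d_H(y,z) = max_i log(y_i/z_i) - min_i log(y_i/z_i).
   d_H(y,z) <= M  iff  forall i j, log(y_i/z_i) - log(y_j/z_j) <= M. *)
Definition hilbert_le {n} (y z : vec n) (M : R) : Prop :=
  forall i j : 'I_n, ln (y i / z i) - ln (y j / z j) <= M.

Definition hilbert_bounded {n} (A : vec n -> Prop) : Prop :=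
  exists M : R, forall y z, A y -> A z -> hilbert_le y z M.

Definition super_eigenspace {n} (f : vec n -> vec n) (lam : R) : vec n -> Prop :=
  fun x => pos_vec x /\ vle (f x) (vscale lam x).

(* Main.v *)
Require Import Defs.
From mathcomp Require Import ssreflect ssrbool ssrfun eqtype ssrnat seq fintype finset.
From Stdlib Require Import Reals.
From Coquelicot Require Import Coquelicot.
From Stdlib Require Import Lra Classical.
Open Scope R_scope.

Lemma uniform_bound (T : finType) (P : T -> R -> Prop) :
  (forall t a b, P t a -> a <= b -> P t b) ->
  (forall t, exists a, P t a) -> exists a, forall t, P t a.
Proof.
  move=> Hmon Hex.
  suff: forall s : seq T, exists a, forall t, t \in s -> P t a.
  { move=> /(_ (enum T)) [a Ha]; exists a => t; apply: Ha; by rewrite mem_enum. }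
  elim=> [|x s [a Ha]].
  - exists 0 => t; by rewrite in_nil.
  - case: (Hex x) => b Hb. exists (Rmax a b) => t; rewrite in_cons => /orP [/eqP -> | Ht].
    + apply: Hmon Hb _; apply Rmax_r.
    + apply: Hmon (Ha t Ht) _; apply Rmax_l.
Qed.

Lemma argmin_ex (T : finType) (g : T -> R) (d : T) : exists t0, forall t, g t0 <= g t.
Proof.
  suff: forall s : seq T, exists t0, forall t, t \in s -> g t0 <= g t.
  { move=> /(_ (enum T)) [a Ha]; exists a => t; apply: Ha; by rewrite mem_enum. }
  elim=> [|x s [a Ha]].
  - exists d => t; by rewrite in_nil.
  - case: (Rle_dec (g x) (g a)) => Hxa.
    + exists x => t; rewrite in_cons => /orP [/eqP -> | Ht]; first lra.
      have := Ha t Ht; lra.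
    + exists a => t; rewrite in_cons => /orP [/eqP -> | Ht]; first lra.
      exact: Ha.
Qed.

Lemma uJ_pos n u (J : {set 'I_n}) : 0 < u -> pos_vec (uJ u J).
Proof. move=> Hu i; rewrite /uJ; case: (i \in J); lra. Qed.

Lemma g_mono n (f : vec n -> vec n) J i u v :
  monotone f -> 0 < u -> u <= v -> f (uJ u J) i <= f (uJ v J) i.
Proof.
  move=> Hm Hu Huv; apply: Hm; try (apply: uJ_pos; lra).
  move=> k; rewrite /uJ; case: (k \in J); lra.
Qed.

Lemma lim_bound n (f : vec n -> vec n) J i :
  monotone f -> ex_finite_lim (fun u => f (uJ u J) i) p_infty ->
  exists C, forall u, 0 < u -> f (uJ u J) i <= C.
Proof.
  move=> Hm [l /is_lim_spec Hl].
  have [M0 HM0] := Hl (mkposreal 1 Rlt_0_1).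
  exists (l + 1) => u Hu.
  have := HM0 (Rmax u (Rabs M0 + 1)).
  have H1 : M0 < Rmax u (Rabs M0 + 1).
  { apply: Rlt_le_trans (Rmax_r _ _). have := Rle_abs M0; lra. }
  move=> /(_ H1) /= Hab.
  have := g_mono _ _ J i _ _ Hm Hu (Rmax_l u (Rabs M0 + 1)).
  have Hab' := Rle_abs (f (uJ (Rmax u (Rabs M0 + 1)) J) i - l). simpl in Hab. lra.
Qed.

Lemma mono_bounded_lim (g : R -> R) M :
  (forall u v, 0 < u -> u <= v -> g u <= g v) -> (forall u, 0 < u -> g u <= M) ->
  ex_finite_lim g p_infty.
Proof.
  move=> Hm Hb.
  pose E := fun r => exists u, 0 < u /\ r = g u.
  have HE : bound E by exists M => r [u [Hu ->]]; apply: Hb.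
  have HE1 : exists x, E x by exists (g 1); exists 1; split; [lra|].
  have [L [Hub Hlub]] := completeness E HE HE1.
  exists L; apply/is_lim_spec => eps /=.
  have [u0 [Hu0 Hgu0]] : exists u0, 0 < u0 /\ L - eps < g u0.
  { apply: NNPP => Hn.
    have : L <= L - eps.
    { apply: Hlub => r [u [Hu ->]]. apply: Rnot_lt_le => Hlt; apply: Hn; exists u; split; lra. }
    have := cond_pos eps; lra. }
  exists u0 => y Hy.
  have H1 : g y <= L by apply: Hub; exists y; split; [lra|].
  have H2 := Hm u0 y Hu0 (Rlt_le _ _ Hy).
  rewrite /Rabs; case: Rcase_abs => _; lra.
Qed.

Lemma unbounded n (f : vec n -> vec n) J i :
  monotone f -> ~ ex_finite_lim (fun u => f (uJ u J) i) p_infty ->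
  forall M, exists U, 1 <= U /\ forall u, U <= u -> M < f (uJ u J) i.
Proof.
  move=> Hm Hnl M; apply: NNPP => Hn; apply: Hnl.
  apply: (mono_bounded_lim _ M).
  - move=> u v Hu Huv; exact: g_mono.
  - move=> u Hu; apply: Rnot_lt_le => Hlt; apply: Hn.
    exists (Rmax 1 u); split; first exact: Rmax_l.
    move=> v Hv; apply: Rlt_le_trans Hlt _; apply: g_mono => //.
    apply: Rle_trans (Rmax_r 1 u) Hv.
Qed.

Definition rleb (a b : R) : bool := if Rle_dec a b then true else false.
Lemma rlebP a b : rleb a b <-> a <= b.
Proof. rewrite /rleb; case: Rle_dec => H; split => //. Qed.

Definition Aset {n} (c : R) (x : vec n) : {set 'I_n} := [set i | rleb (x i) c].
Lemma in_Aset n c (x : vec n) i : i \in Aset c x <-> x i <= c.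
Proof. rewrite /Aset inE; exact: rlebP. Qed.

Lemma dir2 n (f : vec n -> vec n) lam :
  monotone f -> indecomposable f -> 0 < lam ->
  exists c, 1 <= c /\ forall x, pos_vec x -> (forall i, 1 <= x i) -> (exists i0, x i0 <= 1) ->
    vle (f x) (vscale lam x) -> forall i, x i <= c.
Proof.
  move=> Hm Hind Hlam.
  have Hunif : forall M, exists U, 1 <= U /\ forall J : {set 'I_n}, J != set0 -> J != setT ->
     exists i, i \notin J /\ forall u, U <= u -> M < f (uJ u J) i.
  { move=> M.
    pose P := (fun (J : {set 'I_n}) U => 1 <= U /\ (J != set0 -> J != setT ->
       exists i, i \notin J /\ forall u, U <= u -> M < f (uJ u J) i)).
    have [U HU] : exists U, forall J, P J U; last first.
      exists U; split; first exact: (proj1 (HU set0)).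
      move=> J HJ0 HJT; exact: (proj2 (HU J) HJ0 HJT).
    apply: uniform_bound; rewrite /P.
    - move=> J a b [H1 H2] Hab; split; first lra.
      move=> HJ0 HJT; have [i [Hi Hu]] := H2 HJ0 HJT; exists i; split => // u Hu'.
      apply: Hu; lra.
    - move=> J. case: (boolP (J != set0)) => HJ0; last by exists 1; split; [lra|].
      case: (boolP (J != setT)) => HJT; last by exists 1; split; [lra|].
      have [i [Hi Hni]] : exists i, i \notin J /\ ~ ex_finite_lim (fun u => f (uJ u J) i) p_infty.
      { apply: NNPP => Hn; apply: Hind; exists (~: J), J; split; [|split; [|split; [|split]]] => //.
        - apply/setP => x; rewrite !inE; by case: (x \in J).
        - apply/setP => x; rewrite !inE; by case: (x \in J).
        - apply/set0Pn; apply: NNPP => Hn'; move/negP: HJT; apply.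
          apply/eqP/setP => x; rewrite inE; case: (boolP (x \in J)) => // Hx.
          exfalso; apply: Hn'; exists x; by rewrite inE.
        - move=> i; rewrite inE => Hi; apply: NNPP => Hl; apply: Hn; exists i; by split. }
      have [U [HU1 HU]] := unbounded n f J i Hm Hni M.
      exists U; split => // _ _; exists i; split => //. }
  have Hclaim : forall k : nat, exists c, 1 <= c /\ forall x, pos_vec x -> (forall i, 1 <= x i) ->
    (exists i0, x i0 <= 1) ->
    vle (f x) (vscale lam x) -> (leq k.+1 #|Aset c x|) \/ (forall i, x i <= c).
  { elim=> [|k [c [Hc1 IH]]].
    - exists 1; split; first lra. move=> x _ _ [i0 Hi0] _; left.
      apply/card_gt0P; exists i0; exact/in_Aset.
    - have [U [HU1 HU]] := Hunif (lam * c).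
      exists (Rmax c U); split; first by apply: Rle_trans (Rmax_l c U).
      move=> x Hx Hx1 Hx0 Hfx.
      have Hcc' := Rmax_l c U. have HUc' := Rmax_r c U.
      case: (IH x Hx Hx1 Hx0 Hfx) => [Hk | Hall]; last first.
      { right => i; apply: Rle_trans (Hall i) Hcc'. }
      case: (classic (forall i, x i <= Rmax c U)) => [Hall|Hnall]; first by right.
      left.
      have [i1 Hi1] := not_all_ex_not _ _ Hnall.
      set J := ~: Aset c x.
      have HJ0 : J != set0.
      { apply/set0Pn; exists i1; rewrite inE; apply/negP => /in_Aset; lra. }
      have HJT : J != setT.
      { have /card_gt0P [i0 Hi0] := leq_ltn_trans (leq0n k) Hk.
        apply/negP => /eqP HJ; have : i0 \in J by rewrite HJ inE.
        by rewrite inE Hi0. }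
      have [i [HiJ Hi]] := HU J HJ0 HJT.
      have Hxi : x i <= c. { apply/in_Aset; move: HiJ; by rewrite inE negbK. }
      have [j [HjJ Hj]] : exists j, j \in J /\ x j <= Rmax c U.
      { apply: NNPP => Hn.
        have Hle : vle (uJ U J) x.
        { move=> k'; rewrite /uJ; case: (boolP (k' \in J)) => Hk'; last exact: Hx1.
          apply: Rnot_lt_le => Hlt; apply: Hn; exists k'; split => //; lra. }
        have := Hm _ _ (uJ_pos _ U J ltac:(lra)) Hx Hle i.
        have := Hfx i. have := Hi U (Rle_refl U). rewrite /vscale.
        have := Rmult_le_compat_l lam _ _ (Rlt_le _ _ Hlam) Hxi. lra. }
      have Hprop : Aset c x \proper Aset (Rmax c U) x.
      { apply/properP; split.
        - apply/subsetP => k' /in_Aset Hk'; apply/in_Aset; lra.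
        - exists j; first exact/in_Aset. move: HjJ; by rewrite inE. }
      exact: leq_ltn_trans Hk (proper_card Hprop). }
  have [c [Hc1 Hc]] := Hclaim n.
  exists c; split => // x Hx Hx1 Hx0 Hfx i.
  case: (Hc x Hx Hx1 Hx0 Hfx) => // Hn; exfalso.
  have := max_card (Aset c x); rewrite card_ord leqNgt.
  by rewrite Hn.
Qed.

Theorem theorem5 (n : nat) (f : vec n -> vec n) :
  maps_pos f -> homogeneous f -> monotone f ->
  ((forall lam : R, 0 < lam -> hilbert_bounded (super_eigenspace f lam))
   <-> indecomposable f).
Proof.
  move=> Hpos Hhom Hm; split.
  - move=> Hb [I [J [HIJ [HIJT [HI0 [HJ0 Hlim]]]]]].
    have [a Ha] : exists a, forall t : 'I_n, 1 <= a /\ f (fun _ => 1) t <= a /\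
        (t \in I -> forall u, 0 < u -> f (uJ u J) t <= a).
    { apply: uniform_bound.
      - move=> t a b [H1 [H2 H3]] Hab; split; [lra|split; [lra|]] => Ht u Hu.
        have := H3 Ht u Hu; lra.
      - move=> t. case: (boolP (t \in I)) => Ht.
        + have [C HC] := lim_bound n f J t Hm (Hlim t Ht).
          exists (Rmax 1 (Rmax (f (fun _ => 1) t) C)).
          have := Rmax_l 1 (Rmax (f (fun _ => 1) t) C).
          have := Rmax_r 1 (Rmax (f (fun _ => 1) t) C).
          have := Rmax_l (f (fun _ => 1) t) C. have := Rmax_r (f (fun _ => 1) t) C.
          move=> H1 H2 H3 H4; split; [lra|split; [lra|]] => _ u Hu.
          have := HC u Hu; lra.
        + exists (Rmax 1 (f (fun _ => 1) t)); split; [apply Rmax_l| split; [apply Rmax_r|]] => //. }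
    have [j0 Hj0] := set0Pn J HJ0. have [i0 Hi0] := set0Pn I HI0.
    have Ha1 : 1 <= a by case: (Ha i0).
    have Hsup : forall u, 1 <= u -> super_eigenspace f a (uJ u J).
    { move=> u Hu; split; first (apply: uJ_pos; lra).
      move=> t; rewrite /vscale.
      case: (boolP (t \in J)) => HtJ.
      - have -> : uJ u J t = u by rewrite /uJ HtJ.
        have Hone : pos_vec (fun _ : 'I_n => 1) by move=> k; lra.
        have Hle : vle (uJ u J) (vscale u (fun _ => 1)).
        { move=> k; rewrite /uJ /vscale; case: (k \in J); lra. }
        have := Hm _ _ (uJ_pos _ u J ltac:(lra)) (fun k => Rmult_lt_0_compat u 1 ltac:(lra) (Hone k)) Hle t.
        rewrite (Hhom u _ ltac:(lra) Hone) /vscale.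
        case: (Ha t) => _ [H2 _].
        have := Rmult_le_compat_l u _ _ ltac:(lra) H2. lra.
      - have HtI : t \in I.
        { move/setP: HIJT => /(_ t); rewrite !inE (negbTE HtJ) orbF => ->; done. }
        have -> : uJ u J t = 1 by rewrite /uJ (negbTE HtJ).
        case: (Ha t) => _ [_ H3]. have := H3 HtI u ltac:(lra). lra. }
    have [M HM] := Hb a ltac:(lra).
    set u := exp (Rabs M + 1).
    have Hu : 1 <= u.
    { have := exp_ineq1 (Rabs M + 1) ltac:(have := Rabs_pos M; lra).
      have := Rabs_pos M; rewrite /u; lra. }
    have := HM _ _ (Hsup u Hu) (Hsup 1 (Rle_refl 1)) j0 i0.
    have Hi0J : i0 \notin J.
    { apply/negP => Hi0J; move/setP: HIJ => /(_ i0); by rewrite !inE Hi0 Hi0J. }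
    rewrite /uJ Hj0 (negbTE Hi0J) /Rdiv Rinv_1 !Rmult_1_r ln_1 /u ln_exp.
    have := Rle_abs M; lra.
  - move=> Hind lam Hlam.
    have [c [Hc1 Hc]] := dir2 n f lam Hm Hind Hlam.
    exists (2 * ln c) => y z [Hy Hfy] [Hz Hfz] i j.
    have Hnorm : forall w : vec n, pos_vec w -> vle (f w) (vscale lam w) ->
        exists m, forall t, w m <= w t /\ w t <= c * w m.
    { move=> w Hw Hfw.
      have [m Hm0] := argmin_ex _ w i.
      exists m.
      have Hwm := Hw m.
      set a := / w m.
      have Ha : 0 < a by apply: Rinv_0_lt_compat.
      have Haw : a * w m = 1 by rewrite /a; field; lra.
      have Hx := Hc (vscale a w).
      move=> t; split; first exact: Hm0.
      have : vscale a w t <= c.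
      { apply: Hx.
        - move=> k; rewrite /vscale; apply: Rmult_lt_0_compat => //.
        - move=> k; rewrite /vscale -Haw; apply: Rmult_le_compat_l; [lra | exact: Hm0].
        - exists m; rewrite /vscale; lra.
        - rewrite (Hhom a w Ha Hw) => k; rewrite /vscale.
          have := Rmult_le_compat_l a _ _ (Rlt_le _ _ Ha) (Hfw k); rewrite /vscale; lra. }
      rewrite /vscale => H.
      have := Rmult_le_compat_l (w m) _ _ (Rlt_le _ _ Hwm) H.
      have -> : w m * (a * w t) = w t by rewrite -Rmult_assoc (Rmult_comm (w m)) Haw Rmult_1_l.
      lra. }
    have [my Hmy] := Hnorm y Hy Hfy. have [mz Hmz] := Hnorm z Hz Hfz.
    have Hyi := Hy i. have Hyj := Hy j. have Hzi := Hz i. have Hzj := Hz j.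
    have Hym := Hy my. have Hzm := Hz mz.
    rewrite !ln_div //.
    case: (Hmy i) => _ H1. case: (Hmy j) => H2 _. case: (Hmz j) => _ H3. case: (Hmz i) => H4 _.
    have L1 := ln_le _ _ Hyi H1. rewrite ln_mult // in L1; last lra.
    have L2 := ln_le _ _ Hym H2.
    have L3 := ln_le _ _ Hzj H3. rewrite ln_mult // in L3; last lra.
    have L4 := ln_le _ _ Hzm H4.
    lra.
Qed.
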